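(* Let $\mathcal{M}$ be a model category with localization functor $h:\mathcal{M}\to\mathbf{Ho}(\mathcal{M})$. If two diagrams $F:\underline{I}\to\mathcal{M}$ and $G:\underline{J}\to\mathcal{M}$ (objects of $\mathrm{diag}(\mathcal{M})$) are related by a span $F\leftarrow H\rightarrow G$ in $\mathrm{diag}(\mathcal{M})$ of maps which are open up to homotopy, then $F$ and $G$ are bisimilar up to homotopy.
   Context: For a category $\mathcal{K}$, $\mathrm{diag}(\mathcal{K})$ has as objects functors $F:\underline{I}\to\mathcal{K}$ from small categories; a morphism from $F:\underline{I}_1\to\mathcal{K}$ to $G:\underline{I}_2\to\mathcal{K}$ is a pair $(f,\mu)$ with $f:\underline{I}_1\to\underline{I}_2$ a functor and $\mu:F\Rightarrow G\circ f$ a natural transformation; composition $(g,\nu)(f,\mu)=(gf,(\nu f)\odot\mu)$. A morphism $(f,\mu):F\to G$ is open if $f$ is surjective on objects, every morphism $f(i)\to j'$ of $\underline{I}_2$ is the image $f(\phi)$ of some morphism $\phi:i\to j$ of $\underline{I}_1$, and $\mu$ is a natural isomorphism. Two objects $F:\underline{I}\to\mathcal{K}$, $G:\underline{J}\to\mathcal{K}$ are bisimilar if there is a set $\mathcal{R}$ of triples $(i,\eta,j)$, $i\in\underline{I}$, $j\in\underline{J}$, $\eta:F(i)\cong G(j)$ an isomorphism, such that every object of $\underline{I}$ and every object of $\underline{J}$ occurs in some triple; for every $(i,\eta,j)\in\mathcal{R}$ and $\phi:i\to i'$ there are $(i',\eta',j')\in\mathcal{R}$ and $\psi:j\to j'$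 with $\eta'F(\phi)=G(\psi)\eta$; and symmetrically for every $(i,\eta,j)\in\mathcal{R}$ and $\psi:j\to j'$ there are $(i',\eta',j')\in\mathcal{R}$ and $\phi:i\to i'$ with $\eta'F(\phi)=G(\psi)\eta$. A morphism $(f,\mu):F\to G$ of $\mathrm{diag}(\mathcal{M})$ is open up to homotopy if $(f,h\mu):h\circ F\to h\circ G$ is open in $\mathrm{diag}(\mathbf{Ho}(\mathcal{M}))$; $F,G$ are bisimilar up to homotopy if $h\circ F$ and $h\circ G$ are bisimilar. *)

(* Defs.v *)
Set Implicit Arguments.
Unset Strict Implicit.

Record Category := {
  ob :> Type;
  hom : ob -> ob -> Type;
  idm : forall x, hom x x;
  cmp : forall x y z, hom y z -> hom x y -> hom x z;
  cmp_id_l : forall x y (f : hom x y), cmp (idm y) f = f;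
  cmp_id_r : forall x y (f : hom x y), cmp f (idm x) = f;
  cmp_assoc : forall x y z w (f : hom x y) (g : hom y z) (k : hom z w),
      cmp k (cmp g f) = cmp (cmp k g) f
}.
Arguments hom {c} x y.
Arguments idm {c} x.
Arguments cmp {c x y z} g f.
Notation "g \o f" := (cmp g f) (at level 40, left associativity).

Definition isIso {C : Category} {x y : C} (f : hom x y) : Prop :=
  exists g : hom y x, g \o f = idm x /\ f \o g = idm y.

Record Functor (C D : Category) := {
  fob :> C -> D;
  fmap : forall x y, hom x y -> hom (fob x) (fob y);
  fmap_id : forall x, fmap (idm x) = idm (fob x);
  fmap_cmp : forall x y z (f : hom x y) (g : hom y z),
      fmap (g \o f) = fmap g \o fmap f
}.
Arguments fmap {C D} f0 {x y} _.

Definition compF {C D E : Category} (F : Functor C D) (G : Functor D E)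
  : Functor C E.
Proof.
  refine {| fob := fun x => G (F x);
            fmap := fun x y f => fmap G (fmap F f) |}.
  - intros x; rewrite !fmap_id; reflexivity.
  - intros x y z f g; rewrite !fmap_cmp; reflexivity.
Defined.

Record NatTrans {C D : Category} (F G : Functor C D) := {
  ntc :> forall x, hom (F x) (G x);
  nt_nat : forall x y (f : hom x y), ntc y \o fmap F f = fmap G f \o ntc x
}.

Definition hcast {C : Category} {x x' y y' : C} (ex : x = x') (ey : y = y')
  (f : hom x y) : hom x' y' :=
  match ex in _ = x1 return hom x1 y' with
  | eq_refl => match ey in _ = y1 return hom x y1 with eq_refl => f end
  end.

Definition feq {C D : Category} (F G : Functor C D) : Prop :=
  exists e : forall x, F x = G x,
    forall x y (f : hom x y), hcast (e x) (e y) (fmap F f) = fmap G f.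

Definition opCat (C : Category) : Category.
Proof.
  refine {| ob := ob C; hom := fun x y => @hom C y x; idm := fun x => @idm C x;
            cmp := fun x y z g f => @cmp C z y x f g |}.
  - intros; apply cmp_id_r.
  - intros; apply cmp_id_l.
  - intros; symmetry; apply cmp_assoc.
Defined.

Definition has_terminal (C : Category) : Prop :=
  exists t : C, forall x : C, exists u : hom x t, forall u' : hom x t, u' = u.

Definition has_binary_products (C : Category) : Prop :=
  forall a b : C, exists (p : C) (pa : hom p a) (pb : hom p b),
    forall (x : C) (f : hom x a) (g : hom x b),
      exists u : hom x p, (pa \o u = f /\ pb \o u = g) /\
        forall u' : hom x p, pa \o u' = f -> pb \o u' = g -> u' = u.

Definition has_equalizers (C : Category) : Prop :=
  forall (a b : C) (f g : hom a b), exists (e : C) (m : hom e a),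
    f \o m = g \o m /\
    forall (x : C) (k : hom x a), f \o k = g \o k ->
      exists u : hom x e, m \o u = k /\ forall u' : hom x e, m \o u' = k -> u' = u.

Definition has_finite_limits (C : Category) : Prop :=
  has_terminal C /\ has_binary_products C /\ has_equalizers C.

Definition has_finite_colimits (C : Category) : Prop :=
  has_finite_limits (opCat C).

Definition morClass (C : Category) := forall x y : C, hom x y -> Prop.

Definition is_retract {C : Category} {a b c d : C} (f : hom a b) (g : hom c d) : Prop :=
  exists (i : hom a c) (r : hom c a) (i' : hom b d) (r' : hom d b),
    r \o i = idm a /\ r' \o i' = idm b /\ g \o i = i' \o f /\ f \o r = r' \o g.

Definition lifts {C : Category} {a b x y : C} (i : hom a b) (p : hom x y) : Prop :=
  forall (u : hom a x) (v : hom b y), p \o u = v \o i ->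
    exists l : hom b x, l \o i = u /\ p \o l = v.

Definition retract_closed {C : Category} (K : morClass C) : Prop :=
  forall (a b c d : C) (f : hom a b) (g : hom c d), is_retract f g -> K _ _ g -> K _ _ f.

Record ModelStructure (C : Category) := {
  weq : morClass C;
  cof : morClass C;
  fib : morClass C;
  MC1_lim : has_finite_limits C;
  MC1_colim : has_finite_colimits C;
  MC2_comp : forall (x y z : C) (f : hom x y) (g : hom y z),
      weq f -> weq g -> weq (g \o f);
  MC2_left : forall (x y z : C) (f : hom x y) (g : hom y z),
      weq f -> weq (g \o f) -> weq g;
  MC2_right : forall (x y z : C) (f : hom x y) (g : hom y z),
      weq g -> weq (g \o f) -> weq f;
  MC3_weq : retract_closed weq;
  MC3_cof : retract_closed cof;
  MC3_fib : retract_closed fib;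
  MC4_cof : forall (a b x y : C) (i : hom a b) (p : hom x y),
      cof i -> fib p -> weq p -> lifts i p;
  MC4_fib : forall (a b x y : C) (i : hom a b) (p : hom x y),
      cof i -> weq i -> fib p -> lifts i p;
  MC5_cof : forall (x y : C) (f : hom x y), exists (z : C) (i : hom x z) (p : hom z y),
      f = p \o i /\ cof i /\ weq i /\ fib p;
  MC5_fib : forall (x y : C) (f : hom x y), exists (z : C) (i : hom x z) (p : hom z y),
      f = p \o i /\ cof i /\ fib p /\ weq p
}.
Arguments weq {C} m {x y} f.
Arguments cof {C} m {x y} f.
Arguments fib {C} m {x y} f.

Definition is_localization {C : Category} (W : morClass C) (D : Category)
  (h : Functor C D) : Prop :=
  (forall (x y : C) (f : hom x y), W x y f -> isIso (fmap h f)) /\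
  forall (E : Category) (G : Functor C E),
    (forall (x y : C) (f : hom x y), W x y f -> isIso (fmap G f)) ->
    exists G' : Functor D E, feq (compF h G') G /\
      forall G'' : Functor D E, feq (compF h G'') G -> feq G'' G'.

Arguments is_localization {C} W D h.

(* An object of diag(K) is a functor F : I -> K from a (small) category I. *)
Record DiagMor {K I1 I2 : Category} (F : Functor I1 K) (G : Functor I2 K) := {
  dm_fun : Functor I1 I2;
  dm_nt : NatTrans F (compF dm_fun G)
}.
Arguments dm_fun {K I1 I2 F G} d.
Arguments dm_nt {K I1 I2 F G} d.

Definition is_open {K I1 I2 : Category} {F : Functor I1 K} {G : Functor I2 K}
  (m : DiagMor F G) : Prop :=
  (forall j : I2, exists i : I1, dm_fun m i = j) /\
  (forall (i : I1) (j' : I2) (g : hom (dm_fun m i) j'),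
     exists (j : I1) (e : dm_fun m j = j') (phi : hom i j),
       hcast eq_refl e (fmap (dm_fun m) phi) = g) /\
  (forall i : I1, isIso (dm_nt m i)).

Definition whiskerNT {K L I1 I2 : Category} (h : Functor K L)
  (F : Functor I1 K) (G : Functor I2 K) (f : Functor I1 I2)
  (mu : NatTrans F (compF f G)) :
  NatTrans (compF F h) (compF f (compF G h)).
Proof.
  refine (@Build_NatTrans _ _ (compF F h) (compF f (compF G h))
            (fun i => fmap h (mu i)) _).
  intros x y phi; simpl.
  rewrite <- !fmap_cmp. f_equal. exact (nt_nat mu phi).
Defined.

Definition diag_whisker {K L I1 I2 : Category} (h : Functor K L)
  {F : Functor I1 K} {G : Functor I2 K} (m : DiagMor F G)
  : DiagMor (compF F h) (compF G h) :=
  {| dm_fun := dm_fun m; dm_nt := whiskerNT h (dm_nt m) |}.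

Definition open_up_to_homotopy {M HoM I1 I2 : Category} (h : Functor M HoM)
  {F : Functor I1 M} {G : Functor I2 M} (m : DiagMor F G) : Prop :=
  is_open (diag_whisker h m).

(* The set R of triples (i, eta, j) is a relation R i j eta, all of whose
   members eta are isomorphisms. *)
Definition bisimilar {K I J : Category} (F : Functor I K) (G : Functor J K) : Prop :=
  exists R : forall (i : I) (j : J), hom (F i) (G j) -> Prop,
    (forall i j (eta : hom (F i) (G j)), R i j eta -> isIso eta) /\
    (forall i : I, exists j eta, R i j eta) /\
    (forall j : J, exists i eta, R i j eta) /\
    (forall i j (eta : hom (F i) (G j)) (i' : I) (phi : hom i i'), R i j eta ->
       exists (j' : J) (eta' : hom (F i') (G j')) (psi : hom j j'),
         R i' j' eta' /\ eta' \o fmap F phi = fmap G psi \o eta) /\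
    (forall i j (eta : hom (F i) (G j)) (j' : J) (psi : hom j j'), R i j eta ->
       exists (i' : I) (eta' : hom (F i') (G j')) (phi : hom i i'),
         R i' j' eta' /\ eta' \o fmap F phi = fmap G psi \o eta).

Definition bisimilar_up_to_homotopy {M HoM I J : Category} (h : Functor M HoM)
  (F : Functor I M) (G : Functor J M) : Prop :=
  bisimilar (compF F h) (compF G h).

(* Main.v *)
Require Import Defs.

Section Gen.
Context {K I J L : Category} (F : Functor I K) (G : Functor J K) (H : Functor L K)
  (p : DiagMor H F) (q : DiagMor H G).

Inductive Rel : forall (i : I) (j : J), hom (F i) (G j) -> Prop :=
  mkR : forall (l : L) (minv : hom (F (dm_fun p l)) (H l)),
    minv \o dm_nt p l = idm _ -> dm_nt p l \o minv = idm _ ->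
    Rel (dm_fun p l) (dm_fun q l) (dm_nt q l \o minv).

Lemma iso_cmp {C : Category} {x y z : C} (f : hom x y) (g : hom y z) :
  isIso f -> isIso g -> isIso (g \o f).
Proof.
  intros [f' [H1 H2]] [g' [H3 H4]]. exists (f' \o g'). split.
  - rewrite cmp_assoc, <- (cmp_assoc g g' f'), H3, cmp_id_r. exact H1.
  - rewrite cmp_assoc, <- (cmp_assoc f' f g), H2, cmp_id_r. exact H4.
Qed.

Lemma iso_inv {C : Category} {x y : C} (f : hom x y) (f' : hom y x) :
  f' \o f = idm x -> f \o f' = idm y -> isIso f'.
Proof. intros; exists f; split; assumption. Qed.

Lemma inv_nat {C : Category} {a b c d : C} (m : hom a b) (minv : hom b a)
  (m' : hom c d) (minv' : hom d c) (x : hom b d) (y : hom a c) :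
  m \o minv = idm _ -> minv' \o m' = idm _ -> x \o m = m' \o y ->
  minv' \o x = y \o minv.
Proof.
  intros E1 E2 E3.
  rewrite <- (cmp_id_r (minv' \o x)), <- E1, cmp_assoc.
  rewrite <- (cmp_assoc m x minv'), E3, (cmp_assoc y m' minv'), E2, cmp_id_l.
  reflexivity.
Qed.

Lemma gen_bisim : is_open p -> is_open q -> bisimilar F G.
Proof.
  intros [ps [po pi]] [qs [qo qi]].
  exists Rel. split; [|split; [|split; [|split]]].
  - intros i j eta HR. destruct HR as [l minv E1 E2].
    apply iso_cmp; [exact (iso_inv _ _ E1 E2)| apply qi].
  - intros i. destruct (ps i) as [l <-].
    destruct (pi l) as [minv [E1 E2]].
    exists (dm_fun q l), (dm_nt q l \o minv). constructor; assumption.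
  - intros j. destruct (qs j) as [l <-].
    destruct (pi l) as [minv [E1 E2]].
    exists (dm_fun p l), (dm_nt q l \o minv). constructor; assumption.
  - intros i j eta i' phi HR. destruct HR as [l minv E1 E2].
    destruct (po l i' phi) as [l' [e [chi Hc]]]. destruct e. simpl in Hc. subst phi.
    destruct (pi l') as [minv' [E1' E2']].
    exists (dm_fun q l'), (dm_nt q l' \o minv'), (fmap (dm_fun q) chi).
    split; [constructor; assumption|].
    assert (N1 := nt_nat (dm_nt p) chi). assert (N2 := nt_nat (dm_nt q) chi).
    simpl in N1, N2.
    assert (A := inv_nat _ _ _ _ _ _ E2 E1' (eq_sym N1)).
    rewrite <- (cmp_assoc _ minv' (dm_nt q l')), A, cmp_assoc.
    transitivity ((fmap G (fmap (dm_fun q) chi) \o dm_nt q l) \o minv); [exact (f_equal (fun t => t \o minv) N2) | symmetry; apply cmp_assoc].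
  - intros i j eta j' psi HR. destruct HR as [l minv E1 E2].
    destruct (qo l j' psi) as [l' [e [chi Hc]]]. destruct e. simpl in Hc. subst psi.
    destruct (pi l') as [minv' [E1' E2']].
    exists (dm_fun p l'), (dm_nt q l' \o minv'), (fmap (dm_fun p) chi).
    split; [constructor; assumption|].
    assert (N1 := nt_nat (dm_nt p) chi). assert (N2 := nt_nat (dm_nt q) chi).
    simpl in N1, N2.
    assert (A := inv_nat _ _ _ _ _ _ E2 E1' (eq_sym N1)).
    rewrite <- (cmp_assoc _ minv' (dm_nt q l')), A, cmp_assoc.
    transitivity ((fmap G (fmap (dm_fun q) chi) \o dm_nt q l) \o minv); [exact (f_equal (fun t => t \o minv) N2) | symmetry; apply cmp_assoc].
Qed.
End Gen.

Theorem proposition5p5 (M : Category) (MS : ModelStructure M)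
  (HoM : Category) (h : Functor M HoM)
  (hloc : is_localization (fun x y (f : hom x y) => weq MS f) HoM h)
  (I J L : Category) (F : Functor I M) (G : Functor J M) (H : Functor L M)
  (p : DiagMor H F) (q : DiagMor H G) :
  open_up_to_homotopy h p -> open_up_to_homotopy h q ->
  bisimilar_up_to_homotopy h F G.
Proof.
  intros Hp Hq. exact (gen_bisim _ _ _ (diag_whisker h p) (diag_whisker h q) Hp Hq).
Qed.
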